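(* Let $\mathfrak{g}$ be a finite-dimensional complex Lie algebra and let $x\cdot y=[\phi(x),y]$ be an inner CPA-structure on $\mathfrak{g}$, with $\phi$ a Lie algebra endomorphism. Let $\mathfrak{g}=\bigoplus_\alpha\mathfrak{g}_\alpha$ be the generalized eigenspace decomposition of $\mathfrak{g}$ with respect to $\phi$ (with $\mathfrak{g}_\gamma=0$ if $\gamma$ is not an eigenvalue). Then $[\mathfrak{g}_\alpha,\mathfrak{g}_\beta]\subseteq\mathfrak{g}_{\alpha\beta}$ for all $\alpha,\beta$, and $[\mathfrak{g}_\alpha,\mathfrak{g}_\beta]\neq0$ implies $\alpha+\beta=0$.
   Context: A CPA-structure on $\mathfrak{g}$ is a bilinear product $x\cdot y$ satisfying, for all $x,y,z$: $x\cdot y=y\cdot x$; $[x,y]\cdot z=x\cdot(y\cdot z)-y\cdot(x\cdot z)$; $x\cdot[y,z]=[x\cdot y,z]+[y,x\cdot z]$. It is inner if $x\cdot y=[\phi(x),y]$ with $\phi$ a Lie algebra homomorphism $\mathfrak{g}\to\mathfrak{g}$. *)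

(* Defs.v *)
(* Complex numbers are modelled as R[i] = complex R for
   R : realType (mathcomp-analysis reals, which form a real closed field). *)
From HB Require Import structures.
From mathcomp Require Import all_boot all_order all_algebra.
From mathcomp Require Import reals.
From mathcomp Require Export complex.
Set Implicit Arguments. Unset Strict Implicit. Unset Printing Implicit Defensive.
Import Order.TTheory GRing.Theory Num.Theory.
Local Open Scope ring_scope.

Section LieDefs.
Variables (K : fieldType) (V : lmodType K).

Definition is_lie_bracket (br : V -> V -> V) : Prop :=
  [/\ forall (a : K) (x y z : V), br (a *: x + y) z = a *: br x z + br y z,
      forall (a : K) (x y z : V), br x (a *: y + z) = a *: br x y + br x z,
      forall x : V, br x x = 0 &
      forall x y z : V, br x (br y z) + br y (br z x) + br z (br x y) = 0].

Definition is_lie_hom (br : V -> V -> V) (phi : V -> V) : Prop :=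
  (forall (a : K) (x y : V), phi (a *: x + y) = a *: phi x + phi y) /\
  (forall x y : V, phi (br x y) = br (phi x) (phi y)).

Definition is_CPA (br : V -> V -> V) (pr : V -> V -> V) : Prop :=
  [/\ forall (a : K) (x y z : V), pr (a *: x + y) z = a *: pr x z + pr y z,
      forall (a : K) (x y z : V), pr x (a *: y + z) = a *: pr x y + pr x z,
      forall x y : V, pr x y = pr y x,
      forall x y z : V, pr (br x y) z = pr x (pr y z) - pr y (pr x z) &
      forall x y z : V, pr x (br y z) = br (pr x y) z + br y (pr x z)].

Definition is_inner_CPA (br : V -> V -> V) (phi : V -> V) : Prop :=
  is_lie_hom br phi /\ is_CPA br (fun x y => br (phi x) y).

Definition gen_eigenspace (phi : V -> V) (a : K) (x : V) : Prop :=
  exists k : nat, iter k (fun v => phi v - a *: v) x = 0.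

End LieDefs.

(* Main.v *)
Require Import Defs.
From HB Require Import structures.
From mathcomp Require Import all_boot all_order all_algebra.
From mathcomp Require Import reals complex.
From mathcomp Require Import zify.
Set Implicit Arguments. Unset Strict Implicit.
Import GRing.Theory Num.Theory.
Local Open Scope ring_scope.

Lemma iter_lin (K : fieldType) (V : lmodType K) (f : V -> V)
  (Hf : forall (c : K) u v, f (c *: u + v) = c *: f u + f v) :
  forall k (c : K) u v, iter k f (c *: u + v) = c *: iter k f u + iter k f v.
Proof. by elim=> [//|k IH] c u v /=; rewrite IH Hf. Qed.

Lemma iter_lin0 (K : fieldType) (V : lmodType K) (f : V -> V)
  (Hf : forall (c : K) u v, f (c *: u + v) = c *: f u + f v) :
  forall k, iter k f 0 = 0.
Proof.
have f0 : f 0 = 0.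
  have := Hf 1 0 0; rewrite !scale1r addr0 => H.
  by apply: (@addrI _ (f 0)); rewrite -H addr0.
by elim=> [//|k IH] /=; rewrite IH f0.
Qed.

Lemma gen_sub (K : fieldType) (V : lmodType K) (phi : V -> V) (a : K)
  (Hphi : forall (c : K) u v, phi (c *: u + v) = c *: phi u + phi v) :
  (forall (c : K) u v, gen_eigenspace phi a u -> gen_eigenspace phi a v ->
     gen_eigenspace phi a (c *: u + v)) /\ gen_eigenspace phi a 0.
Proof.
have Hf : forall (c : K) u v, (fun w => phi w - a *: w) (c *: u + v) =
   c *: (fun w => phi w - a *: w) u + (fun w => phi w - a *: w) v.
  move=> c u v /=; rewrite Hphi scalerDr !scalerA mulrC -scalerA.
  by rewrite scalerBr opprD !addrA; congr (_ + _); rewrite addrAC.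
split; last by exists 0%N.
move=> c u v [k1 Hu] [k2 Hv]; exists (k1 + k2)%N.
rewrite iter_lin // {1}addnC !iterD Hu Hv !iter_lin0 //.
by rewrite scaler0 addr0.
Qed.

Theorem lemma2p12 (R : realType) (V : vectType R[i])
    (br : V -> V -> V) (phi : V -> V) :
  is_lie_bracket br -> is_inner_CPA br phi ->
  (forall (a b : R[i]) (x y : V),
      gen_eigenspace phi a x -> gen_eigenspace phi b y ->
      gen_eigenspace phi (a * b) (br x y)) /\
  (forall a b : R[i],
      (exists x y : V, [/\ gen_eigenspace phi a x, gen_eigenspace phi b y
                          & br x y <> 0]) ->
      a + b = 0).
Proof.
move=> [HL HR Halt Hjac] [[Hphi Hphib] [_ _ Hcomm _ _]].
have br0l : forall z, br 0 z = 0.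
  move=> z; have := HL 1 0 0 z; rewrite !scale1r addr0 => H.
  by apply: (@addrI _ (br 0 z)); rewrite -H addr0.
have br0r : forall z, br z 0 = 0.
  move=> z; have := HR 1 z 0 0; rewrite !scale1r addr0 => H.
  by apply: (@addrI _ (br z 0)); rewrite -H addr0.
have brDl : forall x y z, br (x + y) z = br x z + br y z.
  by move=> x y z; have := HL 1 x y z; rewrite !scale1r.
have brDr : forall x y z, br z (x + y) = br z x + br z y.
  by move=> x y z; have := HR 1 z x y; rewrite !scale1r.
have brZl : forall c x z, br (c *: x) z = c *: br x z.
  by move=> c x z; have := HL c x 0 z; rewrite !addr0 br0l addr0.
have brZr : forall c x z, br z (c *: x) = c *: br z x.
  by move=> c x z; have := HR c z x 0; rewrite !addr0 br0r addr0.
have anti : forall x y, br x y = - br y x.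
  move=> x y; apply/eqP; rewrite -subr_eq0 opprK; apply/eqP.
  by have := Halt (x + y); rewrite brDl !brDr !Halt add0r addr0.
have decx : forall (c : R[i]) x, phi x = (phi x - c *: x) + c *: x.
  by move=> c x; rewrite subrK.
split.
  move=> a b x y [k Hx] [l Hy].
  have [genD gen0] := gen_sub (a * b) Hphi.
  have key : forall x y, br (phi x) (phi y) - (a * b) *: br x y =
     a *: br x (phi y - b *: y) + b *: br (phi x - a *: x) y
     + br (phi x - a *: x) (phi y - b *: y).
    move=> u v; rewrite {1}(decx a u) {1}(decx b v).
    move: (phi u - a *: u) (phi v - b *: v) => u' v'.
    rewrite !brDl !brDr !brZl !brZr scalerA.
    rewrite [_ + (_ + _)]addrA addrK.
    by rewrite addrC (addrC (br u' v')) addrA.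
  suff H : forall n k l x y, (k + l <= n)%N ->
     iter k (fun v => phi v - a *: v) x = 0 ->
     iter l (fun v => phi v - b *: v) y = 0 ->
     gen_eigenspace phi (a * b) (br x y) by exact: (H _ k l x y (leqnn _) Hx Hy).
  elim=> [|n IH] [|k'] [|l'] u v Hkl Hu Hv;
    rewrite /= in Hu Hv; try (by rewrite ?Hu ?Hv ?br0l ?br0r); try lia.
  have : gen_eigenspace phi (a * b)
     (a *: br u (phi v - b *: v) + (b *: br (phi u - a *: u) v
      + (1 *: br (phi u - a *: u) (phi v - b *: v) + 0))).
    have Hu' : iter k' (fun v => phi v - a *: v) (phi u - a *: u) = 0.
      by rewrite -iterSr; exact: Hu.
    have Hv' : iter l' (fun w => phi w - b *: w) (phi v - b *: v) = 0.
      by rewrite -iterSr; exact: Hv.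
    apply genD; first by apply: (IH k'.+1 l') => //; lia.
    apply genD; first by apply: (IH k' l'.+1) => //; lia.
    apply genD; last exact: gen0.
    by apply: (IH k' l') => //; lia.
  move=> [m Hm]; exists m.+1; rewrite iterSr Hphib key.
  by rewrite scale1r addr0 addrA in Hm.
move=> a b [x [y [[k Hx] [l Hy] Hne]]].
case: (eqVneq (a + b) 0) => // Hab; exfalso; apply: Hne.
have key : forall u v, br (phi u - a *: u) v + br u (phi v - b *: v)
   + (a + b) *: br u v = 0.
  move=> u v.
  have Hs : br (phi u) v + br u (phi v) = 0.
    by rewrite (anti u) Hcomm subrr.
  rewrite {1}(decx a u) {1}(decx b v) in Hs.
  move: (phi u - a *: u) (phi v - b *: v) Hs => u' v'.
  rewrite brDl brDr !brZl !brZr => <-.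
  by rewrite scalerDl addrACA.
suff H : forall n k l x y, (k + l <= n)%N ->
   iter k (fun v => phi v - a *: v) x = 0 ->
   iter l (fun v => phi v - b *: v) y = 0 -> br x y = 0
  by exact: (H _ k l x y (leqnn _) Hx Hy).
elim=> [|n IH] [|k'] [|l'] u v Hkl Hu Hv;
  rewrite /= in Hu Hv; try (by rewrite ?Hu ?Hv ?br0l ?br0r); try lia.
have := key u v.
have Hu' : iter k' (fun v => phi v - a *: v) (phi u - a *: u) = 0.
  by rewrite -iterSr; exact: Hu.
have Hv' : iter l' (fun w => phi w - b *: w) (phi v - b *: v) = 0.
  by rewrite -iterSr; exact: Hv.
rewrite (IH k' l'.+1 (phi u - a *: u) v) ?(IH k'.+1 l' u (phi v - b *: v)) //;
  try lia; try exact: Hu; try exact: Hv.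
rewrite !add0r => /eqP; rewrite scaler_eq0 (negPf Hab) => /eqP //.
Qed.
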